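(* Let $S=\{x_1,\dots,x_n\}$ be a GCD closed set of positive integers with $x_1<x_2<\cdots<x_n$. (1) If $x_i\mid x_j$ for all $1\le i<j\le n$, then $[S]$ is nonsingular. (2) If the numbers $x_2/x_1,x_3/x_1,\dots,x_n/x_1$ are pairwise relatively prime, then $[S]$ is nonsingular. (3) If for each $k$ with $3\le k\le n$ there exists at most one index $i_k$ with $2\le i_k\le k-1$ and $x_{i_k}\mid x_k$, then $[S]$ is nonsingular.
   Context: $S$ is GCD closed if $\gcd(x,y)\in S$ for all $x,y\in S$. The LCM matrix $[S]$ has $(i,j)$ entry $\mathrm{lcm}(x_i,x_j)$. *)

(* Defs.v *)
From HB Require Import structures.
From mathcomp Require Import all_boot all_order all_algebra.
Set Implicit Arguments. Unset Strict Implicit. Unset Printing Implicit Defensive.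
Import GRing.Theory Num.Theory.

(* The set S = {x_0 < ... < x_(n-1)} is given by a function x : nat -> nat,
   only its values on indices i < n matter (0-based indexing). *)

Definition strictly_increasing (n : nat) (x : nat -> nat) : Prop :=
  forall i j, i < j -> j < n -> x i < x j.

Definition positive_elems (n : nat) (x : nat -> nat) : Prop :=
  forall i, i < n -> 0 < x i.

Definition gcd_closed (n : nat) (x : nat -> nat) : Prop :=
  forall i j, i < n -> j < n -> exists2 k, k < n & gcdn (x i) (x j) = x k.

Definition lcm_matrix (n : nat) (x : nat -> nat) : 'M[rat]_n :=
  \matrix_(i < n, j < n) ((lcmn (x i) (x j))%:R : rat).

(* Main.v *)
Require Import Defs.
From HB Require Import structures.
From mathcomp Require Import all_boot all_order all_algebra.
From mathcomp Require Import ring.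
Import GRing.Theory Num.Theory.

Lemma lcmR a b : 0 < gcdn a b ->
  ((lcmn a b)%:R = a%:R * b%:R / (gcdn a b)%:R :> rat)%R.
Proof.
move=> g0; have gn : ((gcdn a b)%:R != 0 :> rat)%R by rewrite pnatr_eq0 -lt0n.
apply: (mulIf gn).
by rewrite divfK ?pnatr_eq0 -?lt0n // -!natrM muln_lcm_gcd.
Qed.

Lemma core n (x : nat -> nat)
  (Hpos : positive_elems n x) (Hinc : strictly_increasing n x)
  (Hgcd : gcd_closed n x) (H0 : forall j, j < n -> x 0 %| x j)
  (p : 'I_n -> 'I_n)
  (Hp : forall i : 'I_n, 0 < i -> [/\ p i != i, x (p i) %| x i &
        forall j, j < n -> j != i -> x j %| x i -> x j %| x (p i)]) :
  (\det (lcm_matrix n x) != 0)%R.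
Proof.
have inj : forall i j, i < n -> j < n -> x i = x j -> i = j.
  move=> i j ain jn e; case: (ltngtP i j) => // h.
    by have := Hinc _ _ h jn; rewrite e ltnn.
  by have := Hinc _ _ h ain; rewrite e ltnn.
have ndvd : forall i j, i < n -> j < i -> ~~ (x i %| x j).
  move=> i j ain ji; apply/negP => /dvdn_leq.
  by rewrite Hpos ?(ltn_trans ji) // => /(_ isT); rewrite leqNgt Hinc.
have geq : forall (i : 'I_n) j, 0 < i -> j < n -> ~~ (x i %| x j) ->
    gcdn (x i) (x j) = gcdn (x (p i)) (x j).
  move=> i j i0 jn nd; have [pne pd pm] := Hp i i0.
  have [k kn ek] := Hgcd i j (ltn_ord i) jn.
  have kdi : x k %| x i by rewrite -ek dvdn_gcdl.
  have ki : k != i by apply/eqP => ki; move: nd; rewrite -ki -ek dvdn_gcdr.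
  have := pm k kn ki kdi => kp.
  apply/eqP; rewrite eqn_dvd; apply/andP; split.
    by rewrite ek dvdn_gcd kp -ek dvdn_gcdr.
  by rewrite dvdn_gcd dvdn_gcdr (dvdn_trans (dvdn_gcdl _ _) pd).
pose r (i : 'I_n) : rat := ((x i)%:R / (x (p i))%:R)%R.
pose N : 'M[rat]_n := (\matrix_(i < n, k < n) ((k == i)%:R - ((0 < i)%N && (k == p i))%:R * r i))%R.
pose B := (N *m lcm_matrix n x)%R.
have BE : forall i j, B i j = ((lcmn (x i) (x j))%:R - ((0 < i)%N)%:R * r i * (lcmn (x (p i)) (x j))%:R)%R.
  move=> i j; rewrite !mxE.
  under eq_bigr => k _ do rewrite !mxE mulrBl.
  rewrite sumrB (bigD1 i) //= eqxx mul1r big1 ?addr0; last first.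
    by move=> k /negbTE ->; rewrite mul0r.
  congr (_ - _)%R; rewrite (bigD1 (p i)) //= eqxx andbT big1 ?addr0 ?mulrA //.
  by move=> k /negbTE ->; rewrite andbF mul0r mul0r.
have xR0 : forall i, i < n -> ((x i)%:R != 0 :> rat)%R.
  by move=> i ain; rewrite pnatr_eq0 -lt0n Hpos.
have Blow : forall i j : 'I_n, j < i -> B i j = 0%R.
  move=> i j ji; have i0 : 0 < i by apply: leq_ltn_trans ji.
  have nd := ndvd i j (ltn_ord i) ji.
  rewrite BE i0 mul1r /r lcmR ?gcdn_gt0 ?Hpos // lcmR ?gcdn_gt0 ?Hpos //.
  rewrite (geq i j i0 (ltn_ord j) nd).
  have g0 : ((gcdn (x (p i)) (x j))%:R != 0 :> rat)%R.
    by rewrite pnatr_eq0 -lt0n gcdn_gt0 Hpos.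
  have := xR0 _ (ltn_ord (p i)) => p0.
  by field; rewrite g0 p0.
have Bdiag : forall i : 'I_n, B i i != 0%R.
  move=> i; rewrite BE; have [i0|i0] := posnP i.
    rewrite i0 mul0r mul0r subr0 (lcmn_idPr (dvdnn _)). by apply: xR0; rewrite -i0 ltn_ord.
  have [pne pd _] := Hp i i0.
  rewrite mul1r (lcmn_idPr (dvdnn _)) (lcmn_idPr pd) /r.
  apply/negP; rewrite subr_eq0 => /eqP e.
  have e2 : (1 * (x i)%:R = ((x i)%:R / (x (p i))%:R) * (x i)%:R :> rat)%R by rewrite mul1r.
  have e3 := mulIf (xR0 _ (ltn_ord i)) e2.
  have : ((x (p i))%:R = (x i)%:R :> rat)%R.
    have -> : ((x (p i))%:R = (x (p i))%:R * ((x i)%:R / (x (p i))%:R) :> rat)%R.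
      by rewrite -e3 mulr1.
    by rewrite mulrCA mulfV ?mulr1 ?xR0.
  move/eqP; rewrite eqr_nat => /eqP/(inj _ _ (ltn_ord _) (ltn_ord _)) /val_inj.
  by move/eqP: pne.
have dB : (\det B = \prod_(i < n) B i i)%R.
  rewrite -det_tr det_trig; last first.
    apply/forallP => i; apply/forallP => j; apply/implyP => ij.
    by rewrite mxE Blow.
  by apply: eq_bigr => i _; rewrite mxE.
have : (\det B != 0)%R by rewrite dB; apply/prodf_neq0 => i _; apply: Bdiag.
by rewrite det_mulmx; apply: contra => /eqP ->; rewrite mulr0.
Qed.

Lemma dvd_lt n (x : nat -> nat) (Hpos : positive_elems n x) (Hinc : strictly_increasing n x)
  i j : i < n -> j < n -> j != i -> x j %| x i -> j < i.
Proof.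
move=> ain jn ne d; case: (ltngtP j i) => // h; last by move/eqP: ne; rewrite h.
have := dvdn_leq (Hpos _ ain) d; by rewrite leqNgt Hinc.
Qed.

Lemma x0dvd n (x : nat -> nat) (Hpos : positive_elems n x) (Hinc : strictly_increasing n x)
  (Hgcd : gcd_closed n x) j : j < n -> x 0 %| x j.
Proof.
move=> jn; have n0 : 0 < n by apply: leq_ltn_trans jn.
have [k kn ek] := Hgcd 0 j n0 jn.
have kd : x k %| x 0 by rewrite -ek dvdn_gcdl.
have k0 : k = 0.
  case: (posnP k) => // k0.
  by have := dvdn_leq (Hpos _ n0) kd; rewrite leqNgt Hinc.
by move: ek; rewrite k0 => <-; rewrite dvdn_gcdr.
Qed.

Lemma core2 n (x : nat -> nat)
  (Hpos : positive_elems n x) (Hinc : strictly_increasing n x)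
  (Hgcd : gcd_closed n x)
  (Hex : forall i : 'I_n, 0 < i -> exists p : 'I_n, [/\ p != i, x p %| x i &
        forall j, j < n -> j != i -> x j %| x i -> x j %| x p]) :
  (\det (lcm_matrix n x) != 0)%R.
Proof.
have : forall i : 'I_n, exists p : 'I_n, 0 < i -> [/\ p != i, x p %| x i &
        forall j, j < n -> j != i -> x j %| x i -> x j %| x p].
  move=> i; case: (posnP i) => i0; first by exists i; rewrite i0.
  by have [p hp] := Hex i i0; exists p.
case/fin_all_exists => p hp.
apply: (@core n x Hpos Hinc Hgcd (@x0dvd n x Hpos Hinc Hgcd) p) => i i0.
exact: hp.
Qed.

Theorem corollary4p7 (n : nat) (x : nat -> nat)
  (Hpos : positive_elems n x) (Hinc : strictly_increasing n x)
  (Hgcd : gcd_closed n x) :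
  (* (1) chain of divisibility *)
  ((forall i j, i < j -> j < n -> x i %| x j) ->
     (\det (lcm_matrix n x) != 0)%R) /\
  (* (2) x_2/x_1, ..., x_n/x_1 pairwise coprime (0-based: indices 1..n-1) *)
  ((forall i j, 1 <= i -> i < j -> j < n ->
       coprime (x i %/ x 0) (x j %/ x 0)) ->
     (\det (lcm_matrix n x) != 0)%R) /\
  (* (3) for each k (3<=k<=n, 1-based) at most one i_k, 2<=i_k<=k-1, with x_{i_k} | x_k *)
  ((forall k, 2 <= k -> k < n ->
       forall i i', 1 <= i -> i < k -> x i %| x k ->
                    1 <= i' -> i' < k -> x i' %| x k -> i = i') ->
     (\det (lcm_matrix n x) != 0)%R).
Proof.
have H0 := @x0dvd n x Hpos Hinc Hgcd.
have DL := @dvd_lt n x Hpos Hinc.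
split; [|split].
- move=> Hc; apply: core2 => // i i0.
  have pn : i.-1 < n by apply: leq_ltn_trans (leq_pred _) (ltn_ord i).
  exists (Ordinal pn); split => /=.
  + by rewrite -(inj_eq val_inj) /= neq_ltn prednK // leqnn.
  + by apply: Hc; rewrite ?prednK.
  move=> j jn ji d; have := DL _ _ (ltn_ord i) jn ji d.
  rewrite -{1}(prednK i0) ltnS leq_eqVlt => /orP [/eqP -> //|lt].
  exact: Hc.
- move=> Hc; apply: core2 => // i i0.
  have pn : 0 < n by apply: leq_ltn_trans (ltn_ord i).
  exists (Ordinal pn); split => /=.
  + by rewrite -(inj_eq val_inj) /= neq_ltn i0.
  + exact: H0.
  move=> j jn ji d; have jl := DL _ _ (ltn_ord i) jn ji d.
  case: (posnP j) => [-> //|j0].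
  have := Hc j i j0 jl (ltn_ord i).
  have x0p : 0 < x 0 by apply: Hpos.
  have e : x j %/ x 0 %| x i %/ x 0.
    by rewrite -(dvdn_pmul2r x0p) !divnK ?H0.
  rewrite /coprime (gcdn_idPl e) => /eqP e1.
  have : x j = x 0 by rewrite -(divnK (H0 _ jn)) e1 mul1n.
  by move=> e2; have := Hinc 0 j j0 jn; rewrite e2 ltnn.
- move=> Hc; apply: core2 => // i i0.
  have pn : 0 < n by apply: leq_ltn_trans (ltn_ord i).
  case: (boolP [exists j : 'I_n, (0 < j < i) && (x j %| x i)]).
    case/existsP => q /andP [/andP [q0 qi] qd].
    exists q; split => //; first by rewrite -(inj_eq val_inj) /= neq_ltn qi.
    move=> j jn ji d; have jl := DL _ _ (ltn_ord i) jn ji d.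
    case: (posnP j) => [-> //|j0]; first exact: H0.
    have i2 : 2 <= i by apply: leq_ltn_trans qi.
    by rewrite (Hc i i2 (ltn_ord i) j q j0 jl d q0 qi qd).
  move=> hn; exists (Ordinal pn); split => /=.
  + by rewrite -(inj_eq val_inj) /= neq_ltn i0.
  + exact: H0.
  move=> j jn ji d; have jl := DL _ _ (ltn_ord i) jn ji d.
  case: (posnP j) => [-> //|j0].
  by move/existsP: hn; case; exists (Ordinal jn); rewrite /= j0 jl d.
Qed.
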